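(* Under the setting and assumptions in the context (in particular $\lambda_t=c\,e^{-\gamma t}$ with $0<c<1$, $\gamma>0$, the state bound $|x_i(t)|\le\eta$, informative trust observations $E_{\mathcal L}>0>E_{\mathcal M}$, and connectedness of the subgraph induced by the legitimate agents), almost surely the legitimate agents' states converge to a common finite value: there exist almost surely finite random vectors $\tilde x^{\mathcal L},\tilde x^{\mathcal M}\in\mathbb R^{L}$ such that $$\lim_{t\to\infty} x^{\mathcal L}(t)=\mathbf 1\, v^\top(\tilde x^{\mathcal L}+\tilde x^{\mathcal M}),$$ where $v$ is the stochastic vector with $(\overline W^{\mathcal L})^{\infty}=\mathbf 1 v^\top$. Explicitly, writing $P^{\lambda}_{k_0}=\prod_{k=\max\{k_0,T_f\}}^{\infty}(1-\lambda_k)$ and $Q_{k_0}=\prod_{k=k_0}^{\max\{k_0,T_f\}-1}(1-\lambda_k)W^{\mathcal L}_k$ (ordered product, later factors on the left; empty product $=I$), one has $\tilde x^{\mathcal L}=P^{\lambda}_0Q_0x^{\mathcal L}(0)+\sum_{k=0}^{\infty}P^{\lambda}_{k+1}Q_{k+1}\lambda_k x^{\mathcal L}(0)$ and $\tilde x^{\mathcal M}=\sum_{k=0}^{T_f-1}P^{\lambda}_{k+1}Q_{k+1}(1-\lambda_k)W^{\mathcal M}_k x^{\mathcal M}(k)$.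
   Context: Agents $\mathcal V=\{1,\dots,N\}$ communicate over a fixed graph $\mathcal G=(\mathcal V,\mathcal E)$; $(i,j)\in\mathcal E$ means $j$ can send data to $i$, and $\mathcal N_i=\{j\in\mathcal V:(i,j)\in\mathcal E\}$ (with $i\notin\mathcal N_i$). Legitimate agents are $\mathcal L=\{1,\dots,L\}$, malicious agents $\mathcal M=\{L+1,\dots,N\}$, $M=N-L$. The subgraph induced by $\mathcal L$ is connected. $x_i(t)\in\mathbb R$ is agent $i$'s state, $x^{\mathcal L}(t)\in\mathbb R^L$, $x^{\mathcal M}(t)\in\mathbb R^M$ the stacked states; malicious states evolve arbitrarily. State bound: $\max_{i\in\mathcal V,t\ge0}|x_i(t)|\le\eta$. Nominal matrix $\overline W^{\mathcal L}\in\mathbb R^{L\times L}$: $[\overline W^{\mathcal L}]_{ij}=1/(|\mathcal N_i\cap\mathcal L|+1)$ if $j\in\mathcal N_i\cap\mathcal L$, $0$ if $j\notin\mathcal N_i\cup\{i\}$, and $[\overline W^{\mathcal L}]_{ii}=1-\sum_{j\in\mathcal N_i\cap\mathcal L}[\overline W^{\mathcal L}]_{ij}$. It is primitive and $(\overline W^{\mathcal L})^\infty=\mathbf 1v^\top$ for a stochastic vector $v$. Trust: for each $i\in\mathcal L$, $j\in\mathcal N_i$, $t\ge0$ an observation $\alpha_{ij}(t)\in[0,1]$ is available; for each pair the $\alpha_{ij}(t)$, $t\ge0$, are independent with a common mean, and $E_{\mathcal L}=\mathbb E[\alpha_{ij}]-1/2$ if $j\in\mathcal L$, $E_{\mathcal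 M}=\mathbb E[\alpha_{ij}]-1/2$ if $j\in\mathcal M$; assume $E_{\mathcal L}>0$, $E_{\mathcal M}<0$. Let $\beta_{ij}(t)=\sum_{s=0}^t(\alpha_{ij}(s)-1/2)$ and $\mathcal N_i(t)=\{j\in\mathcal N_i:\beta_{ij}(t)\ge0\}$. Weights: $w_{ij}(t)=1/(|\mathcal N_i(t)|+1)$ if $j\in\mathcal N_i(t)$, $0$ if $j\notin\mathcal N_i(t)\cup\{i\}$, $w_{ii}(t)=1-\sum_{j\in\mathcal N_i}w_{ij}(t)$. Protocol for $i\in\mathcal L$, $t\ge0$: $x_i(t+1)=\lambda_t x_i(0)+(1-\lambda_t)\sum_{j\in\mathcal N_i\cup\{i\}}w_{ij}(t)x_j(t)$, with $\lambda_t=c\,e^{-\gamma t}$, $0<c<1$, $\gamma>0$. $W^{\mathcal L}_t=[w_{ij}(t)]_{i,j\in\mathcal L}$, $W^{\mathcal M}_t=[w_{ij}(t)]_{i\in\mathcal L,j\in\mathcal M}$. $T_f$ is the (random) smallest time such that $W^{\mathcal L}_t=\overline W^{\mathcal L}$ for all $t\ge T_f$; it is finite almost surely. *)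

(* Defs.v *)
From HB Require Import structures.
From mathcomp Require Import all_boot all_order all_algebra.
From mathcomp Require Import all_classical all_reals all_analysis.
Set Implicit Arguments. Unset Strict Implicit. Unset Printing Implicit Defensive.
Import Order.TTheory GRing.Theory Num.Theory.
Import numFieldNormedType.Exports.
Local Open Scope classical_set_scope.
Local Open Scope ring_scope.

(* Agents are 'I_(L + M): legitimate agent i : 'I_L is [lshift M i],
   malicious agent j : 'I_M is [rshift L j].
   E i j (boolean) means (i,j) is an edge, i.e. j can send data to i. *)

Section Defs.
Variable R : realType.
Variables L M : nat.
Notation N := (L + M)%N.
Variable E : rel 'I_N.

Definition legit (i : 'I_L) : 'I_N := lshift M i.
Definition malic (j : 'I_M) : 'I_N := rshift L j.

Definition Erel_L : rel 'I_L := fun i j => E (legit i) (legit j).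

Definition nbL (i : 'I_L) : nat := #|[set j : 'I_L | E (legit i) (legit j)]|.

Definition Wbar : 'M[R]_L :=
  \matrix_(i < L, j < L)
    if j == i then 1 - \sum_(k : 'I_L | E (legit i) (legit k)) 1 / (nbL i).+1%:R
    else if E (legit i) (legit j) then 1 / (nbL i).+1%:R else 0.

Definition lam (c gamma : R) (t : nat) : R := c * expR (- (gamma * t%:R)).

Definition beta (a : nat -> R) (t : nat) : R := \sum_(0 <= s < t.+1) (a s - 1/2).

Section Path.
(* one sample path of the trust observations: al i j t = alpha_ij(t) *)
Variable al : 'I_L -> 'I_N -> nat -> R.

Definition Ntr (i : 'I_L) (t : nat) : {set 'I_N} :=
  [set j : 'I_N | E (legit i) j && (0 <= beta (al i j) t)].

Definition wgt_off (i : 'I_L) (j : 'I_N) (t : nat) : R :=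
  if j \in Ntr i t then 1 / (#|Ntr i t|).+1%:R else 0.

Definition wgt (i : 'I_L) (j : 'I_N) (t : nat) : R :=
  if j == legit i then 1 - \sum_(k : 'I_N | E (legit i) k) wgt_off i k t
  else wgt_off i j t.

Definition WL (t : nat) : 'M[R]_L := \matrix_(i < L, j < L) wgt i (legit j) t.
Definition WM (t : nat) : 'M[R]_(L, M) := \matrix_(i < L, j < M) wgt i (malic j) t.

Definition stable_from (T : nat) : Prop := forall t, (T <= t)%N -> WL t = Wbar.
Definition is_Tf (T : nat) : Prop :=
  stable_from T /\ forall T', stable_from T' -> (T <= T')%N.

Variables (c gamma : R) (Tf : nat).

Fixpoint Qprod (k0 n : nat) : 'M[R]_L :=
  match n with
  | 0 => 1%:M
  | n'.+1 => if (k0 <= n')%N then ((1 - lam c gamma n') *: WL n') *m Qprod k0 n'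
             else 1%:M
  end.

Definition Q (k0 : nat) : 'M[R]_L := Qprod k0 (maxn k0 Tf).

Definition Ppart (k0 n : nat) : R := \prod_(maxn k0 Tf <= k < n) (1 - lam c gamma k).
Definition Plam (k0 : nat) : R := limn (Ppart k0).

Variable xL0 : 'cV[R]_L.
Variable xM : nat -> 'cV[R]_M.

Definition xLterm (i : 'I_L) (k : nat) : R :=
  Plam k.+1 * lam c gamma k * (Q k.+1 *m xL0) i ord0.

Definition xtildeL (i : 'I_L) : R :=
  Plam 0 * (Q 0 *m xL0) i ord0 + limn (series (xLterm i)).

Definition xtildeM (i : 'I_L) : R :=
  \sum_(0 <= k < Tf)
    (Plam k.+1 * (1 - lam c gamma k) * (Q k.+1 *m (WM k *m xM k)) i ord0).

End Path.

End Defs.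

Definition indep_seq d (T : measurableType d) (R : realType)
    (P : probability T R) (X : nat -> T -> R) : Prop :=
  forall (s : seq nat) (B : nat -> set R),
    uniq s -> (forall n, measurable (B n)) ->
    P (\bigcap_(n in [set` s]) (X n @^-1` B n)) =
    (\prod_(n <- s) P (X n @^-1` B n))%E.

(* Main.v *)
Set Warnings "-all".
Require Import Defs.
From HB Require Import structures.
From mathcomp Require Import all_boot all_order all_algebra.
From mathcomp Require Import all_classical all_reals all_analysis.
From mathcomp Require Import ring lra.
Import Order.TTheory GRing.Theory Num.Theory.
Import numFieldNormedType.Exports.
Local Open Scope classical_set_scope.
Local Open Scope ring_scope.

Section Aux.
Variable R : realType.

Lemma cvg_sumr (I : eqType) (r : seq I) (P : pred I) (Ff : I -> nat -> R) (Fa : I -> R) :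
  (forall i, Ff i @ \oo --> Fa i) ->
  (fun n => \sum_(i <- r | P i) Ff i n) @ \oo --> \sum_(i <- r | P i) Fa i.
Proof.
move=> h; elim: r => [|i r IH].
  rewrite big_nil; under eq_cvg do rewrite big_nil; exact: cvg_cst.
rewrite big_cons; under eq_cvg do rewrite big_cons.
case: ifPn => // Pi; exact: cvgD.
Qed.

Lemma tannery (f : nat -> nat -> R) (g a : nat -> R) :
  (forall k, 0 <= a k) -> cvgn (series a) ->
  (forall n k, `|f n k| <= a k) ->
  (forall k, f ^~ k @ \oo --> g k) ->
  cvgn (series g) /\ (fun n => \sum_(0 <= k < n) f n k) @ \oo --> limn (series g).
Proof.
move=> a0 ca fa fg.
have ga : forall k, `|g k| <= a k.
  move=> k; have : cvgn (fun n => `|f n k|) by apply: is_cvg_norm; apply/cvg_ex; exists (g k); exact: fg.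
  move=> cn; rewrite -(cvg_lim _ (cvg_norm (fg k))) //; apply: limr_le => //.
  by near=> n; exact: fa.
have cg : cvgn (series g).
  apply: normed_cvg; apply: (@series_le_cvg _ _ a) => // n; rewrite /= ?normr_ge0 ?ga //.
split => //.
have nda : nondecreasing_seq (series a).
  by apply/nondecreasing_seqP => n; rewrite seriesSr lerDl.
set Sa := limn (series a).
have aS : forall n, series a n <= Sa by exact: nondecreasing_cvgn_le.
have tail : forall K n, (K <= n)%N -> \sum_(K <= k < n) a k <= Sa - series a K.
  move=> K n Kn; rewrite lerBrDl; apply: le_trans (aS n).
  by rewrite /series /= -big_cat_nat.
have Hd : (fun n => \sum_(0 <= k < n) f n k - series g n) @ \oo --> (0:R).
  apply/cvgrPdist_lt => e e0.
  have /cvgrPdist_lt /(_ (e/3)) : series a @ \oo --> Sa by [].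
  move=> /(_ _) [] ; first by rewrite divr_gt0.
  move=> K _ HK.
  have Hfin : (fun n => \sum_(0 <= k < K) `|f n k - g k|) @ \oo --> (0:R).
    have := @cvg_sumr _ (index_iota 0 K) xpredT (fun k n => `|f n k - g k|) (fun _ => 0) _.
    rewrite big1 //; apply => k.
    rewrite -(@normr0 _ R) -(subrr (g k)); apply: cvg_norm; apply: cvgB => //; exact: cvg_cst.
  move/cvgrPdist_lt: Hfin => /(_ (e/3)) [|N _ HN]; first by rewrite divr_gt0.
  near=> n.
  have Kn : (K <= n)%N by near: n; exists K.
  have Nn : (N <= n)%N by near: n; exists N.
  have tK := tail K n Kn.
  have eK : Sa - series a K < e/3.
    by have := HK K (leqnn K); rewrite /= ger0_norm // subr_ge0; exact: aS.
  rewrite sub0r normrN /series /= -sumrB (big_cat_nat (leq0n K) Kn) /=.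
  apply: (le_lt_trans (ler_normD _ _)).
  have e3 : e = e/3 + (e/3 + e/3) by field.
  rewrite [X in _ < X]e3; apply: ltr_leD.
    apply: le_lt_trans (ler_norm_sum _ _ _) _.
    have := HN n Nn; rewrite /= sub0r normrN ger0_norm //; last by apply: sumr_ge0 => *.
  apply: le_trans (ler_norm_sum _ _ _) _.
  have -> : e/3 + e/3 = 2 * (e/3) by ring.
  apply: le_trans (_ : 2 * (Sa - series a K) <= _); last by rewrite ler_pM2l // ltW.
  apply: le_trans (_ : \sum_(K <= i < n) 2 * a i <= _).
    apply: ler_sum => k _; apply: le_trans (ler_normB _ _) _.
    by rewrite mulrDl mul1r lerD.
  by rewrite -mulr_sumr ler_pM2l.
have -> : (fun n => \sum_(0 <= k < n) f n k) = (fun n => (\sum_(0 <= k < n) f n k - series g n) + series g n).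
  by apply: funext => n; rewrite subrK.
rewrite -[limn _]add0r; apply: cvgD => //.
Unshelve. all: by end_near.
Qed.
End Aux.

Section Lam.
Variables (R : realType) (c gamma : R).
Hypotheses (Hc : 0 < c < 1) (Hg : 0 < gamma).

Lemma lam_gt0 k : 0 < lam c gamma k.
Proof. by rewrite /lam mulr_gt0 ?expR_gt0 //; case/andP: Hc. Qed.

Lemma lam_lt1 k : lam c gamma k < 1.
Proof.
case/andP: Hc => c0 c1; rewrite /lam; apply: le_lt_trans c1.
rewrite -[leRHS]mulr1 ler_pM2l // expR_le1 oppr_le0 mulr_ge0 ?ler0n ?ltW //.
Qed.

Lemma lamE k : lam c gamma k = geometric c (expR (- gamma)) k.
Proof. by rewrite /lam /= -expRM_natr mulNr. Qed.

Lemma cvg_series_lam : cvgn (series (lam c gamma)).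
Proof.
have -> : lam c gamma = geometric c (expR (- gamma)).
  by apply: funext => k; rewrite lamE.
apply: is_cvg_geometric_series; rewrite gtr0_norm ?expR_gt0 // expR_lt1 oppr_lt0 //.
Qed.

Variable Tf : nat.

Lemma Ppart_ge0 k0 n : 0 <= Ppart c gamma Tf k0 n.
Proof. apply: prodr_ge0 => k _; rewrite subr_ge0 ltW // lam_lt1 //. Qed.

Lemma Ppart_le1 k0 n : Ppart c gamma Tf k0 n <= 1.
Proof. apply: prodr_ile1 => k _; rewrite subr_ge0 ltW ?lam_lt1 //= lerBlDr lerDl; exact/ltW/lam_gt0. Qed.

Lemma PpartS k0 n : Ppart c gamma Tf k0 n.+1 =
  if (maxn k0 Tf <= n)%N then Ppart c gamma Tf k0 n * (1 - lam c gamma n) else Ppart c gamma Tf k0 n.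
Proof.
rewrite /Ppart; case: leqP => h; first by rewrite big_nat_recr.
by rewrite !big_geq // ltnW.
Qed.

Lemma cvg_Ppart k0 : cvgn (Ppart c gamma Tf k0).
Proof.
apply: nonincreasing_is_cvgn.
  apply/nonincreasing_seqP => n; rewrite PpartS; case: ifP => // _.
  rewrite ler_piMr ?Ppart_ge0 // lerBlDr lerDl; exact/ltW/lam_gt0.
by exists 0 => _ [n _ <-]; exact: Ppart_ge0.
Qed.

Lemma Plam_ge0 k0 : 0 <= Plam c gamma Tf k0.
Proof. by apply: limr_ge; [exact: cvg_Ppart|near=> n; exact: Ppart_ge0]. Unshelve. all: by end_near. Qed.

Lemma Plam_le1 k0 : Plam c gamma Tf k0 <= 1.
Proof. by apply: limr_le; [exact: cvg_Ppart|near=> n; exact: Ppart_le1]. Unshelve. all: by end_near. Qed.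

Lemma Plam_small k0 : (k0 <= Tf)%N -> Plam c gamma Tf k0 = Plam c gamma Tf 0.
Proof. by move=> h; rewrite /Plam /Ppart (maxn_idPr h) max0n. Qed.

End Lam.

Section Core.
Variables (R : realType) (L M : nat) (E : rel 'I_(L + M))
  (al : 'I_L -> 'I_(L + M) -> nat -> R) (x : 'I_(L + M) -> nat -> R) (c gamma : R).
Hypothesis HE : forall i, ~~ E i i.
Hypothesis Hdyn : forall i t,
     x (legit M i) t.+1 =
       lam c gamma t * x (legit M i) 0
       + (1 - lam c gamma t) *
         \sum_(j : 'I_(L + M) | E (legit M i) j || (j == legit M i))
            wgt E al i j t * x j t.

Definition xv t : 'cV[R]_L := \col_(i < L) x (legit M i) t.
Definition xMv t : 'cV[R]_M := \col_(j < M) x (malic L j) t.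

Lemma wgt0 i j t : ~~ E (legit M i) j -> j != legit M i -> wgt E al i j t = 0.
Proof.
move=> nE nl; rewrite /wgt (negbTE nl) /wgt_off.
by rewrite /Ntr inE (negbTE nE).
Qed.

Lemma step t : xv t.+1 = lam c gamma t *: xv 0 +
  (1 - lam c gamma t) *: (WL E al t *m xv t + WM E al t *m xMv t).
Proof.
apply/matrixP => i j; rewrite !mxE Hdyn; congr (_ + _ * _).
rewrite /WL /WM /xv /xMv.
under [X in _ = X + _]eq_bigr do rewrite !mxE. under [X in _ = _ + X]eq_bigr do rewrite !mxE.
rewrite big_mkcond /= /= big_split_ord /=; congr (_ + _); apply: eq_bigr => k _;
  case: ifP => // /negbT; rewrite negb_or => /andP[h1 h2];
  by rewrite wgt0 ?mul0r.
Qed.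

Notation lm := (lam c gamma).
Notation QP := (Qprod E al c gamma).

Lemma Qprod_ge k0 n : (n <= k0)%N -> QP k0 n = 1%:M.
Proof. by case: n => //= n h; rewrite leqNgt h. Qed.

Lemma QprodS k0 n : (k0 <= n)%N -> QP k0 n.+1 = ((1 - lm n) *: WL E al n) *m QP k0 n.
Proof. by move=> /= ->. Qed.

Lemma unroll n : xv n = QP 0 n *m xv 0 +
  \sum_(k < n) QP k.+1 n *m (lm k *: xv 0 + (1 - lm k) *: (WM E al k *m xMv k)).
Proof.
elim: n => [|n IH]; first by rewrite big_ord0 addr0 /= mul1mx.
rewrite step IH big_ord_recr /= ltnn mul1mx.
under [X in _ = _ + (X + _)]eq_bigr => k _ do rewrite ltn_ord.
rewrite !mulmxDr mulmx_sumr !scalerDr -!scalemxAl -!mulmxA scaler_sumr.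
under [X in _ = _ + (X + _)]eq_bigr => k _ do rewrite -!scalemxAl -!mulmxA.
set S := \sum_(k < n) _. set a := lm n *: xv 0. set d := (1 - lm n) *: _.
by rewrite [LHS]addrC -!addrA (addrC _ a).
Qed.

Lemma wgt_off_ge0 i k t : 0 <= wgt_off E al i k t.
Proof. by rewrite /wgt_off; case: ifP => // _; rewrite divr_ge0 ?ler0n. Qed.

Lemma WM0 t : WL E al t = Wbar R E -> WM E al t = 0.
Proof.
move=> HW; apply/matrixP => i j; rewrite !mxE.
have Wik k : WL E al t i k = Wbar R E i k by rewrite HW.
have legn : malic L j != legit M i by rewrite /malic /legit eq_rlshift.
rewrite /wgt (negbTE legn).
have Hsplit : \sum_(k : 'I_(L + M) | E (legit M i) k) wgt_off E al i k t =
   \sum_(k < L | E (legit M i) (legit M k)) wgt_off E al i (legit M k) t +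
   \sum_(k < M | E (legit M i) (malic L k)) wgt_off E al i (malic L k) t.
  by rewrite big_mkcond big_split_ord /= -!big_mkcond.
have HA : \sum_(k < L | E (legit M i) (legit M k)) wgt_off E al i (legit M k) t =
   \sum_(k < L | E (legit M i) (legit M k)) 1 / (nbL E i).+1%:R.
  apply: eq_bigr => k hk.
  have ki : k != i by apply/eqP => ki; move: hk; rewrite ki (negbTE (HE _)).
  have := Wik k; rewrite !mxE /wgt /legit eq_lshift (negbTE ki) -/(legit M i) -/(legit M k) hk; apply.
have := Wik i; rewrite !mxE eqxx /wgt /legit eqxx -/(legit M i) Hsplit HA.
rewrite /legit /malic => /eqP h.
set B := \sum_(k < M | _) _ in h.
have hB : B = 0 by lra.
case hE : (E (lshift M i) (rshift L j)).
  by apply: (psumr_eq0P _ hB) => // k _; exact: wgt_off_ge0.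
by rewrite /wgt_off /Ntr inE /legit hE.
Qed.

Variable Tf : nat.
Hypothesis HTf : stable_from E al Tf.
Notation PP := (Ppart c gamma Tf).
Notation Wb := (Wbar R E).

Lemma step_after t : (Tf <= t)%N -> xv t.+1 = lm t *: xv 0 + (1 - lm t) *: (Wb *m xv t).
Proof. by move=> h; rewrite step (@WM0 t (HTf t h)) (HTf _ h) mul0mx addr0. Qed.

Lemma PPS k0 n : (maxn k0 Tf <= n)%N -> PP k0 n.+1 = PP k0 n * (1 - lm n).
Proof. by move=> h; rewrite /Ppart big_nat_recr. Qed.

Lemma PPnil k0 n : (n <= maxn k0 Tf)%N -> PP k0 n = 1.
Proof. by move=> h; rewrite /Ppart big_geq. Qed.

Lemma unroll_after n : xv (Tf + n) = PP Tf (Tf + n) *: (Wb ^+ n *m xv Tf) +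
  \sum_(k < n) (lm (Tf + k) * PP (Tf + k).+1 (Tf + n)) *: (Wb ^+ (n - k.+1) *m xv 0).
Proof.
elim: n => [|n IH].
  by rewrite addn0 big_ord0 addr0 PPnil ?maxnn // expr0 mul1mx scale1r.
rewrite addnS step_after ?leq_addr // IH big_ord_recr /= subnn expr0 mul1mx.
rewrite [PP (Tf + n).+1 _]PPnil; last by rewrite leq_maxl.
rewrite [PP Tf _.+1]PPS; last by rewrite maxnn leq_addr.
rewrite mulmxDr mulmx_sumr scalerDr scaler_sumr mulr1.
have hW m (y : 'cV[R]_L) : Wb *m (Wb ^+ m *m y) = Wb ^+ m.+1 *m y by rewrite mulmxA exprS mulmxE.
rewrite -scalemxAr hW scalerA mulrC.
rewrite addrCA; congr (_ + _); rewrite addrC; congr (_ + _).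
apply: eq_bigr => k _; rewrite -scalemxAr scalerA.
rewrite [PP (Tf + k).+1 _.+1]PPS; last by rewrite geq_max; apply/andP; split; [rewrite -addnS leq_add2l ltn_ord|rewrite leq_addr].
rewrite subSS hW subnSK ?ltn_ord //; congr (_ *: _); ring.
Qed.

Hypotheses (Hc : 0 < c < 1) (Hg : 0 < gamma).
Variable v : 'I_L -> R.
Hypothesis Hvlim : forall i j : 'I_L, (fun t => (Wb ^+ t) i j) @ \oo --> v j.

Definition om (y : 'cV[R]_L) := \sum_j v j * y j ord0.

Lemma cvg_Wpow (y : 'cV[R]_L) i : (fun n => (Wb ^+ n *m y) i ord0) @ \oo --> om y.
Proof.
under eq_cvg do rewrite mxE.
apply: cvg_sumr => j; apply: cvgMl; exact: Hvlim.
Qed.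

Lemma series_shift (u : nat -> R) N n :
  series (fun k => u (k + N)%N) n = series u (n + N)%N - series u N.
Proof.
rewrite series_addn addrC addKr /series /=.
by rewrite -[in RHS](add0n N) big_addn addnK.
Qed.

Lemma cvg_series_shift (u : nat -> R) N : cvgn (series u) ->
  series (fun k => u (k + N)%N) @ \oo --> limn (series u) - series u N.
Proof.
move=> h; under eq_cvg do rewrite series_shift.
apply: cvgB; last exact: cvg_cst.
by rewrite (cvg_shiftn N (series u)).
Qed.

Lemma cvg_PP p : PP p @ \oo --> Plam c gamma Tf p.
Proof. exact: cvg_Ppart. Qed.

Definition g0 k := lm (Tf + k) * Plam c gamma Tf (Tf + k).+1 * om (xv 0).

Lemma lim_after i : (fun n => x (legit M i) (n + Tf)%N) @ \oo -->
   Plam c gamma Tf Tf * om (xv Tf) + limn (series g0).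
Proof.
pose f n k := lm (Tf + k) * PP (Tf + k).+1 (Tf + n) * (Wb ^+ (n - k.+1) *m xv 0) i ord0.
have Hx n : x (legit M i) (Tf + n) = PP Tf (Tf + n) * (Wb ^+ n *m xv Tf) i ord0
    + \sum_(0 <= k < n) f n k.
  have := congr1 (fun A : 'cV[R]_L => A i ord0) (unroll_after n).
  rewrite /= mxE => ->; rewrite !mxE summxE big_mkord; congr (_ + _).
  by apply: eq_bigr => k _; rewrite /f !mxE.
have cW : cvgn (fun m => (Wb ^+ m *m xv 0) i ord0).
  by apply/cvg_ex; exists (om (xv 0)); exact: cvg_Wpow.
have [C hC] := cvg_has_ub cW.
have hb m : `|(Wb ^+ m *m xv 0) i ord0| <= C by apply: hC; exists m.
have C0 : 0 <= C by apply: le_trans (hb 0%N).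
have lm0 k : 0 <= lm k by apply/ltW/lam_gt0.
have [cg Hlim] : cvgn (series g0) /\ (fun n => \sum_(0 <= k < n) f n k) @ \oo --> limn (series g0).
  apply: (@tannery R f g0 (fun k => lm (Tf + k) * C)).
- by move=> k; rewrite mulr_ge0.
- have -> : (fun k => lm (Tf + k) * C) = C *: (fun k => lm (k + Tf)).
    by apply: funext => k /=; rewrite addnC mulrC.
  apply: is_cvg_seriesZ; apply/cvg_ex; eexists.
  apply: cvg_series_shift; exact: cvg_series_lam.
- move=> n k; rewrite /f normrM (normrM (lm _)) (ger0_norm (lm0 _)) -mulrA ler_wpM2l //.
  rewrite -[C]mul1r ler_pM // ger0_norm ?Ppart_ge0 ?Ppart_le1 //.
- move=> k; rewrite -(cvg_shiftn k.+1).
  have -> : [sequence f (n + k.+1)%N k]_n = (fun n => lm (Tf + k) * PP (Tf + k).+1 (n + (Tf + k.+1)) * (Wb ^+ n *m xv 0) i ord0).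
    by apply: funext => n; rewrite /f /= addnK addnCA.
  rewrite /g0; apply: cvgM; last exact: cvg_Wpow.
  apply: cvgMr.
  by rewrite (cvg_shiftn (Tf + k.+1) (PP (Tf + k).+1)); exact: cvg_PP.
under eq_cvg do rewrite addnC Hx.
apply: cvgD => //; apply: cvgM; last exact: cvg_Wpow.
have -> : (fun n => PP Tf (Tf + n)) = (fun n => PP Tf (n + Tf)) by apply: funext => n; rewrite addnC.
by rewrite (cvg_shiftn Tf (PP Tf)); exact: cvg_PP.
Qed.

Lemma cvg_dom (u b : nat -> R) : (forall k, `|u k| <= b k) -> cvgn (series b) -> cvgn (series u).
Proof.
move=> ub cb; apply: normed_cvg; apply: (@series_le_cvg _ _ b) => // n;
  rewrite /= ?normr_ge0 ?ub //; exact: le_trans (normr_ge0 _) (ub n).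
Qed.

Lemma cvg_unshift (u : nat -> R) N : cvgn (series (fun k => u (k + N)%N)) -> cvgn (series u).
Proof.
move=> h; apply/cvg_ex; exists (limn (series (fun k => u (k + N)%N)) + series u N).
rewrite -(cvg_shiftn N).
have -> : [sequence series u (n + N)%N]_n = (fun n => series (fun k => u (k + N)%N) n + series u N).
  by apply: funext => n; rewrite series_shift subrK.
apply: cvgD => //; exact: cvg_cst.
Qed.

Lemma lim_split (u : nat -> R) N : cvgn (series u) ->
  limn (series u) = series u N + limn (series (fun k => u (k + N)%N)).
Proof.
move=> h; rewrite (cvg_lim _ (@cvg_series_shift u N h)) //; ring.
Qed.

Lemma lmgt0 k : 0 < lm k. Proof. exact: lam_gt0. Qed.
Lemma Pge0 k0 : 0 <= Plam c gamma Tf k0. Proof. exact: Plam_ge0. Qed.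
Lemma Ple1 k0 : Plam c gamma Tf k0 <= 1. Proof. exact: Plam_le1. Qed.

Notation y0 := (xv 0).
Notation xLt := (xLterm E al c gamma Tf y0).
Definition sh (j : 'I_L) k := Plam c gamma Tf (k + Tf).+1 * lm (k + Tf) * y0 j ord0.

Lemma xLt_shift j k : xLt j (k + Tf)%N = sh j k.
Proof.
rewrite /xLterm /sh /Q (maxn_idPl _); last by rewrite ltnW // ltnS leq_addl.
by rewrite Qprod_ge // mul1mx.
Qed.

Lemma cvg_sh j : cvgn (series (sh j)).
Proof.
apply: (@cvg_dom _ (fun k => `|y0 j ord0| * lm (k + Tf))).
  move=> k; rewrite /sh normrM normrM (ger0_norm (Pge0 _)) (ger0_norm (ltW (lmgt0 _))).
  rewrite mulrC ler_wpM2l // -[X in _ <= X]mul1r ler_wpM2r ?Ple1 //; exact/ltW/lmgt0.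
have -> : (fun k => `|y0 j ord0| * lm (k + Tf)) = `|y0 j ord0| *: (fun k => lm (k + Tf)) by [].
apply: is_cvg_seriesZ; apply/cvg_ex; eexists; apply: cvg_series_shift; exact: cvg_series_lam.
Qed.

Lemma cvg_xLt j : cvgn (series (xLt j)).
Proof.
apply: (@cvg_unshift _ Tf); have -> : (fun k => xLt j (k + Tf)%N) = sh j.
  by apply: funext => k; rewrite xLt_shift.
exact: cvg_sh.
Qed.

Lemma lim_g0 : limn (series g0) = \sum_j v j * limn (series (sh j)).
Proof.
apply: cvg_lim => //.
have -> : series g0 = (fun n => \sum_j v j * series (sh j) n).
  apply: funext => n; rewrite /series /=; under [RHS]eq_bigr do rewrite mulr_sumr.
  rewrite [RHS]exchange_big /=; apply: eq_bigr => k _.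
  rewrite /g0 /om mulr_sumr; apply: eq_bigr => j _; rewrite /sh.
  by rewrite [(k + Tf)%N]addnC; ring.
apply: cvg_sumr => j; apply: cvgMr; exact: cvg_sh.
Qed.

Lemma ident j : xtildeL E al c gamma Tf y0 j + xtildeM E al c gamma Tf xMv j =
  Plam c gamma Tf Tf * xv Tf j ord0 + limn (series (sh j)).
Proof.
rewrite /xtildeL (@lim_split _ Tf (cvg_xLt j)).
have -> : (fun k => xLt j (k + Tf)%N) = sh j by apply: funext => k; rewrite xLt_shift.
rewrite /xtildeM /series /= /xLterm.
have PT k : (k <= Tf)%N -> Plam c gamma Tf k = Plam c gamma Tf Tf.
  by move=> h; rewrite (@Plam_small R c gamma Tf k h) (@Plam_small R c gamma Tf Tf (leqnn Tf)).
have QT k : (k <= Tf)%N -> Q E al c gamma Tf k = QP k Tf by move=> h; rewrite /Q (maxn_idPr h).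
rewrite PT // QT //.
under eq_big_nat => k /andP[_ hk] do rewrite PT ?QT //.
under [X in _ + X = _]eq_big_nat => k /andP[_ hk] do rewrite PT ?QT //.
rewrite [xv Tf]unroll [X in _ = _ * X + _]mxE [X in _ = _ * (_ + X) + _]summxE big_mkord [X in _ + X = _]big_mkord.
rewrite mulrDr mulr_sumr.
have -> : \sum_(i < Tf) Plam c gamma Tf Tf * (QP i.+1 Tf *m (lm i *: y0 + (1 - lm i) *: (WM E al i *m xMv i))) j ord0
  = \sum_(i < Tf) Plam c gamma Tf Tf * lm i * (QP i.+1 Tf *m y0) j ord0 +
    \sum_(i < Tf) Plam c gamma Tf Tf * (1 - lm i) * (QP i.+1 Tf *m (WM E al i *m xMv i)) j ord0.
  rewrite -big_split /=; apply: eq_bigr => k _.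
  by rewrite mulmxDr -!scalemxAr !mxE; ring.
lra.
Qed.

Lemma core_all :
  (forall k0, cvgn (Ppart c gamma Tf k0)) /\
  (forall i, cvgn (series (xLterm E al c gamma Tf (xv 0) i))) /\
  (forall i : 'I_L, (fun t => x (legit M i) t) @ \oo -->
      \sum_(j < L) v j * (xtildeL E al c gamma Tf (xv 0) j + xtildeM E al c gamma Tf xMv j)).
Proof.
split; first by move=> k0; exact: cvg_Ppart.
split; first exact: cvg_xLt.
move=> i; rewrite -(cvg_shiftn Tf).
have -> : \sum_(j < L) v j * (xtildeL E al c gamma Tf (xv 0) j + xtildeM E al c gamma Tf xMv j)
   = Plam c gamma Tf Tf * om (xv Tf) + limn (series g0).
  under eq_bigr do rewrite ident.
  rewrite lim_g0 /om mulr_sumr -big_split; apply: eq_bigr => j _; rewrite /=; ring.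
exact: lim_after.
Qed.
End Core.

Theorem mainTheorem1
  (R : realType) (d : measure_display) (Omega : measurableType d)
  (P : probability Omega R)
  (L M : nat) (E : rel 'I_(L + M))
  (al : 'I_L -> 'I_(L + M) -> nat -> Omega -> R)
  (x : 'I_(L + M) -> nat -> Omega -> R)
  (c gamma eta EL EM : R) (v : 'I_L -> R)
  (* graph: no self loops; subgraph induced by L (strongly) connected *)
  (HE : forall i, ~~ E i i)
  (Hconn : forall i j : 'I_L, connect (Erel_L E) i j)
  (* v stochastic with (Wbar)^t --> 1 v^T *)
  (Hv0 : forall j, 0 <= v j) (Hv1 : \sum_j v j = 1)
  (Hvlim : forall i j : 'I_L, (fun t => (Wbar R E ^+ t) i j) @ \oo --> v j)
  (* step sizes *)
  (Hc : 0 < c < 1) (Hg : 0 < gamma)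
  (* trust observations *)
  (Hal_meas : forall i j t, E (legit M i) j -> measurable_fun setT (al i j t))
  (Hal_range : forall i j t w, E (legit M i) j -> 0 <= al i j t w <= 1)
  (Hal_indep : forall i j, E (legit M i) j -> indep_seq P (al i j))
  (HmeanL : forall i (j : 'I_L) t, E (legit M i) (legit M j) ->
     (\int[P]_w (al i (legit M j) t w)%:E = (EL + 1/2)%:E)%E)
  (HmeanM : forall i (j : 'I_M) t, E (legit M i) (malic L j) ->
     (\int[P]_w (al i (malic L j) t w)%:E = (EM + 1/2)%:E)%E)
  (HEL : 0 < EL) (HEM : EM < 0)
  (* T_f is finite almost surely *)
  (HTf : {ae P, forall w,
     exists T, stable_from E (fun i j t => al i j t w) T})
  (* protocol of the legitimate agents *)
  (Hdyn : forall i t w,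
     x (legit M i) t.+1 w =
       lam c gamma t * x (legit M i) 0 w
       + (1 - lam c gamma t) *
         \sum_(j : 'I_(L + M) | E (legit M i) j || (j == legit M i))
            wgt E (fun i j t => al i j t w) i j t * x j t w)
  (* state bound *)
  (Hbound : forall i t w, `|x i t w| <= eta) :
  {ae P, forall w,
    let alw := fun i j t => al i j t w in
    let xL0 := \col_(i < L) x (legit M i) 0 w in
    let xMk := fun k => \col_(j < M) x (malic L j) k w in
    exists Tf : nat,
      is_Tf E alw Tf /\
      (forall k0, cvgn (Ppart c gamma Tf k0)) /\
      (forall i, cvgn (series (xLterm E alw c gamma Tf xL0 i))) /\
      (forall i : 'I_L,
        (fun t => x (legit M i) t w) @ \oo -->
          \sum_(j < L) v j * (xtildeL E alw c gamma Tf xL0 j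
                              + xtildeM E alw c gamma Tf xMk j))}.
Proof.
apply: filterS HTf => w [T HT] /=.
set alw := fun i j t => al i j t w.
have exP : exists n, `[< stable_from E alw n >] by exists T; apply/asboolP.
case: (ex_minnP exP) => Tf /asboolP HTf0 Hmin.
have [H1 [H2 H3]] := @core_all R L M E alw (fun j t => x j t w) c gamma HE
  (fun i t => Hdyn i t w) Tf HTf0 Hc Hg v Hvlim.
exists Tf; split.
  by split => // T' hT'; apply: Hmin; apply/asboolP.
by split => //; split.
Qed.
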